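(* Let $G$ be a finite simple $2$-connected graph with at least $4$ vertices. Suppose that there is at most one vertex $x$ of $G$ for which there exists a vertex $y\in V(G)\setminus(N_G(x)\cup\{x\})$ with $|N_G(x)\cup N_G(y)|\leqslant 3$. Then $G$ contains a chorded cycle.
   Context: A chorded cycle is a cycle together with an edge of the graph, not on the cycle, joining two vertices of the cycle. $N_G(x)$ is the set of neighbours of $x$ in $G$. *)

(* Defs.v *)
(* A finite simple graph is a symmetric irreflexive relation
   e on a finType T (vertex set = T). *)
From mathcomp Require Import all_boot.
Set Implicit Arguments. Unset Strict Implicit. Unset Printing Implicit Defensive.

Definition simple_graph (T : finType) (e : rel T) : Prop :=
  irreflexive e /\ symmetric e.

Definition nbhd (T : finType) (e : rel T) (x : T) : {set T} := [set y | e x y].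

Definition del_vertex (T : finType) (e : rel T) (v : T) : rel T :=
  [rel a b | [&& a != v, b != v & e a b]].

Definition connected_graph (T : finType) (e : rel T) : Prop :=
  forall a b : T, connect e a b.

Definition two_connected (T : finType) (e : rel T) : Prop :=
  [/\ 3 <= #|T|, connected_graph e &
      forall v a b : T, a != v -> b != v -> connect (del_vertex e v) a b].

(* A chorded cycle: a cycle together with an edge uv,
   u,v on the cycle, which is not a cycle edge. *)
Definition is_cycle (T : finType) (e : rel T) (c : seq T) : Prop :=
  3 <= size c /\ ucycle e c.

Definition has_chorded_cycle (T : finType) (e : rel T) : Prop :=
  exists c : seq T, is_cycle e c /\
    exists u v : T, [/\ u \in c, v \in c, e u v, u != next c v & v != next c u].

Definition bad_vertex (T : finType) (e : rel T) (x : T) : Prop :=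
  exists y : T, [/\ y != x, ~~ e x y & #|nbhd e x :|: nbhd e y| <= 3].

(* Main.v *)
Require Import Defs.
From mathcomp Require Import all_boot zify.
From Stdlib Require Import Classical.
Set Implicit Arguments. Unset Strict Implicit. Unset Printing Implicit Defensive.

Lemma chord_lem (T : finType) (e : rel T) x p u q v :
  uniq (x :: p ++ u :: rcons q v) -> path e x (p ++ u :: rcons q v) ->
  e v x -> e x u -> p != [::] -> has_chorded_cycle e.
Proof.
move=> U P evx exu pn.
exists (x :: p ++ u :: rcons q v); split.
  split; first by rewrite /= size_cat /= size_rcons; lia.
  apply/andP; split=> //.
  by rewrite /= rcons_path P /= last_cat /= last_rcons.
exists x, u; split.
- by rewrite mem_head.
- by rewrite inE mem_cat inE eqxx !orbT.
- done.
- rewrite next_nth inE mem_cat inE eqxx !orbT.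
  move: U => /= /andP[xn]; rewrite cat_uniq => /and3P[_ /norP[un _] _].
  have xu : (x == u) = false.
    by apply/negbTE; apply: contra xn => /eqP ->; rewrite mem_cat mem_head orbT.
  rewrite xu index_cat (negbTE un) /= eqxx addn0 nth_cat ltnNge leqnSn /= subSn // subnn /=.
  apply/negP=> /eqP xe; move: xn; rewrite mem_cat inE !negb_or => /and3P[_ _].
  rewrite {1}xe; apply/negP/negPn; apply: mem_nth; by rewrite size_rcons.
- case: p pn U P => // y p' _ U P; rewrite /next /= eqxx; move: U => /= /andP[_]; rewrite cat_uniq /=.
  move=> /and5P[H _ _ _ _]; apply/eqP => uy; move: H; by rewrite -uy mem_cat mem_head orbT.
Qed.

Definition good (T : finType) (e : rel T) x s := path e x s && uniq (x :: s).

Lemma chord2 (T : finType) (e : rel T) x p u q v r :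
  symmetric e ->
  good e x (p ++ u :: q ++ v :: r) -> e x u -> e x v ->
  u != head x (p ++ u :: q ++ v :: r) -> has_chorded_cycle e.
Proof.
have E : p ++ u :: q ++ v :: r = (p ++ u :: rcons q v) ++ r.
  by rewrite -catA /= -cats1 -catA.
rewrite /good E => sym /andP[P U] exu exv hu.
move: U; rewrite -cat_cons cat_uniq => /andP[U _].
move: P; rewrite cat_path => /andP[P _].
apply: (chord_lem U P) => //; first by rewrite sym.
by case: p {E U P} hu => //= /eqP.
Qed.

Lemma endA (T : finType) (e : rel T) x s :
  simple_graph e -> good e x s ->
  (forall y t, good e y t -> size t <= size s) -> ~ has_chorded_cycle e ->
  (forall w, e x w -> w \in s) /\
  (forall w1 w2, e x w1 -> e x w2 -> w1 != head x s -> w2 != head x s -> w1 = w2).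
Proof.
move=> [irr sym] gs long nch.
have A1 : forall w, e x w -> w \in s.
  move=> w exw; apply/negPn/negP => ws.
  have : good e w (x :: s).
    move: gs; rewrite /good /= => /andP[-> ->]; rewrite sym exw /= inE negb_or ws andbT.
    rewrite andbT; apply/eqP => wx; move: exw; by rewrite wx irr.
  by move/long; rewrite /= ltnn.
split=> // w1 w2 e1 e2 h1 h2.
case: (eqVneq w1 w2) => // ne; exfalso; apply: nch.
move: gs h1 h2 (A1 _ e2); case/splitPr: (A1 _ e1) => p1 p2 gs h1 h2.
rewrite mem_cat inE eq_sym (negbTE ne) /= orbC; case/orP.
  move=> win; move: gs h1 h2; case/splitPr: win => q1 q2 gs h1 _.
  exact: (chord2 sym gs e1 e2 h1).
move=> win; move: gs h1 h2; case/splitPr: win => q1 q2 gs _ h2.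
rewrite -catA /= in gs h2.
exact: (chord2 sym gs e2 e1 h2).
Qed.

Lemma rotate (T : finType) (e : rel T) x a y w b :
  symmetric e -> good e x (rcons a y ++ w :: b) -> e x w ->
  good e y (rcons (rev a) x ++ w :: b).
Proof.
move=> sym /andP[P U] exw.
have E : y :: rcons (rev a) x = rev (x :: rcons a y).
  by rewrite rev_cons rev_rcons.
apply/andP; split.
  move: P; rewrite !cat_path => /andP[P1 /= /andP[_ P2]].
  rewrite last_rcons /= exw P2 !andbT.
  have := rev_path e x (rcons a y); rewrite last_rcons belast_rcons rev_cons => ->.
  by rewrite (@eq_path _ _ e) // => u v; rewrite sym.
move: U; rewrite -cat_cons -cat_cons E !cat_uniq rev_uniq.
case/and3P=> -> H ->; rewrite andbT /=.
move: H; rewrite /= mem_rev; congr (~~ (_ || _)).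
by apply: eq_has => u; rewrite /= mem_rev.
Qed.

Lemma longest (T : finType) (e : rel T) (x0 : T) :
  exists x s, good e x s /\ forall y t, good e y t -> size t <= size s.
Proof.
have gsz : forall y t, good e y t -> size t < #|T|.
  move=> y t /andP[_ U]; have := card_uniqP U => /= <-; exact: max_card.
suff H : forall n x s, good e x s -> #|T| - size s <= n ->
    exists x s, good e x s /\ forall y t, good e y t -> size t <= size s.
  by apply: (H #|T| x0 [::]); rewrite // /good /= subn0.
elim=> [|n IH] x s g hn; case: (classic (exists y t, good e y t /\ size s < size t)).
- case=> y [t [g' lt]]; have := gsz _ _ g'; lia.
- move=> nex; exists x, s; split=> // y t g'; rewrite leqNgt; apply/negP => lt.
  by apply: nex; exists y, t.
- case=> y [t [g' lt]]; apply: (IH y t g'); have := gsz _ _ g'; lia.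
- move=> nex; exists x, s; split=> // y t g'; rewrite leqNgt; apply/negP => lt.
  by apply: nex; exists y, t.
Qed.

Lemma avoid_set (T : finType) (A : {set T}) : #|A| < #|T| -> exists z, z \notin A.
Proof.
move=> lt; have : 0 < #|~: A| by move: lt; rewrite -(cardsC A); lia.
by case/card_gt0P => z; rewrite in_setC; exists z.
Qed.

Lemma nb_avoid (T : finType) (e : rel T) v x :
  two_connected e -> x != v -> exists y, e x y && (y != v).
Proof.
case=> T3 _ tc xv.
have [z] : exists z, z \notin [set x; v].
  by apply: avoid_set; rewrite cards2; apply: leq_trans T3; case: (x != v).
rewrite !inE negb_or => /andP[zx zv].
case/connectP: (tc v x z xv zv) => [[|y p]] /=.
  by move=> _ ze; rewrite ze eqxx in zx.
by case/andP=> /and3P[_ yv exy] _ _; exists y; rewrite exy yv.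
Qed.
Lemma card3 (T : finType) (a b c : T) : #|[set a; b; c]| <= 3.
Proof. rewrite -setUA cardsU1 cards2; case: (_ \notin _); case: (_ != _); by []. Qed.
Lemma sub3 (T : finType) (A : {set T}) a b c : A \subset [set a; b; c] -> #|A| <= 3.
Proof. by move/subset_leq_card/leq_trans; apply; apply: card3. Qed.

Theorem corollary2p10 (T : finType) (e : rel T) :
  simple_graph e -> two_connected e -> 4 <= #|T| ->
  (forall x1 x2 : T, bad_vertex e x1 -> bad_vertex e x2 -> x1 = x2) ->
  has_chorded_cycle e.
Proof.
move=> sg tc T4 ub; have [irr sym] := sg.
apply: NNPP => nch.
have /card_gt0P [x0 _] : 0 < #|T| by apply: leq_trans T4.
have [x [s [gs long]]] := longest e x0.
have [A1 A2] := endA sg gs long nch.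
have sne : s != [::].
  have [v] : exists v, v \notin [set x].
    by apply: avoid_set; rewrite cards1; apply: leq_trans T4.
  rewrite inE eq_sym => xv.
  have [y /andP[exy _]] := nb_avoid tc xv.
  by apply/eqP => s0; have := A1 _ exy; rewrite s0.
have xh : x != head x s.
  case: s sne gs {long A1 A2} => // v1 s' _ /andP[_] /andP[xn _] /=.
  by apply: contraNneq xn => <-; rewrite mem_head.
have [w /andP[exw wh]] := nb_avoid tc xh.
have ws := A1 _ exw.
move: gs long A1 A2 wh xh; case/splitPr: ws => p1 b.
case/lastP: p1 => [|a y]; first by move=> _ _ _ _ /=; rewrite eqxx.
move=> gs long A1 A2 wh xh.
have g2 := rotate sym gs exw.
have long2 : forall z u, good e z u -> size u <= size (rcons (rev a) x ++ w :: b).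
  by move=> z u /long; rewrite !size_cat !size_rcons size_rev.
have [B1 B2] := endA sg g2 long2 nch.
have eyw : e y w.
  by move: gs => /andP[]; rewrite cat_path last_rcons /= => /andP[_ /andP[]].
have U := gs; move: U => /andP[_ U].
move: U; rewrite /= cat_uniq rcons_uniq /= mem_cat mem_rcons !inE !negb_or /=.
rewrite mem_rcons inE negb_or.
case/and5P => /and3P[/andP[xy xa] xw _] /andP[ya _] /andP[/andP[wy wa] _] _ _.
set hx := head x _ in A2 wh xh.
set hy := head y _ in B2.
have hyin : hy \in rcons (rev a) x by rewrite /hy; case: (rev a) => [|h r] /=; rewrite ?inE eqxx.
have hyw : w != hy.
  apply: contraTneq hyin => <-; rewrite mem_rcons inE mem_rev negb_or.
  by rewrite eq_sym xw wa.
have Nx : forall z, e x z -> z = hx \/ z = w.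
  move=> z exz; case: (eqVneq z hx) => [->|zh]; [by left | right; exact: A2 zh wh].
have Ny : forall z, e y z -> z = hy \/ z = w.
  move=> z eyz; case: (eqVneq z hy) => [->|zh]; [by left | right; exact: B2 zh hyw].
clear long A1 A2 B1 B2 long2 gs g2 hyin wh xh hyw.
rewrite /hx /hy in Nx Ny; clear hx hy.
case: a xa ya wa Nx Ny => [|a1 a'] xa ya wa Nx Ny.
- rewrite /= in Nx Ny.
  have [z] : exists z, z \notin [set x; y; w].
    by apply: avoid_set; apply: leq_ltn_trans (card3 x y w) T4.
  rewrite !inE !negb_or => /andP[/andP[zx zy] zw].
  case: tc => _ _ /(_ w x z xw zw) /connectP [p P zl].
  suff : last x p \in [set x; y] by rewrite -zl !inE (negbTE zx) (negbTE zy).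
  have cl : forall u p, u \in [set x; y] -> path (del_vertex e w) u p -> last u p \in [set x; y].
    move=> u p0; elim: p0 u => [|v p0 IH] u //= uin /andP[/and3P[_ vw euv] P0]; apply: IH P0.
    move: uin; rewrite !inE => /orP[] /eqP ue; subst u.
    - by case: (Nx _ euv) => ve; subst v; [rewrite eqxx orbT | rewrite eqxx in vw].
    - by case: (Ny _ euv) => ve; subst v; [rewrite eqxx | rewrite eqxx in vw].
  by apply: cl P; rewrite !inE eqxx.
- set hy := head y _ in Ny; rewrite /= in Nx.
  have nxy : ~~ e x y.
    apply/negP => exy; case: (Nx _ exy) => ye.
    - by move: ya; rewrite ye mem_head.
    - by rewrite ye eqxx in wy.
  have sub : nbhd e x :|: nbhd e y \subset [set a1; w; hy].
    apply/subsetP => z; rewrite !inE => /orP[/Nx [->|->] | /Ny [->|->]]; by rewrite !eqxx ?orbT.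
  have bx : bad_vertex e x by exists y; split; [rewrite eq_sym | | exact: sub3 sub].
  have byy : bad_vertex e y.
    by exists x; split; [ | rewrite sym | rewrite setUC; exact: sub3 sub].
  by move: xy; rewrite (ub _ _ bx byy) eqxx.
Qed.
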